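(* Let $\mathcal{C}=\{\mathcal{N}_1,\dots,\mathcal{N}_k\}$ be a clustering of a finite set of elements into $k$ (possibly overlapping) clusters, every element belonging to at least one cluster. If $\mathcal{N}_i\setminus\bigcup_{j\neq i}\mathcal{N}_j\neq\emptyset$ for all $i\in[k]$, then $\mathcal{C}$ is the only valid clustering (up to relabeling) that is consistent with the entire query matrix.
   Context: The query matrix has $(i,j)$ entry $1$ if elements $i,j$ belong to a common cluster and $0$ otherwise. A valid clustering consistent with the query matrix is a clustering into $k$ clusters whose query matrix coincides with the given one. *)

(* Defs.v *)
From mathcomp Require Import all_boot all_fingroup.
Set Implicit Arguments. Unset Strict Implicit. Unset Printing Implicit Defensive.

Definition covers (T : finType) (k : nat) (N : 'I_k -> {set T}) : Prop :=
  forall x : T, exists i : 'I_k, x \in N i.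

Definition query_matrix (T : finType) (k : nat) (N : 'I_k -> {set T}) (x y : T) : bool :=
  [exists i : 'I_k, (x \in N i) && (y \in N i)].

Definition private_part (T : finType) (k : nat) (N : 'I_k -> {set T}) (i : 'I_k) : {set T} :=
  N i :\: \bigcup_(j | j != i) N j.

(* Main.v *)
Require Import Defs.
From mathcomp Require Import all_boot all_fingroup.

Theorem theorem11 (T : finType) (k : nat) (N : 'I_k -> {set T}) :
  covers N ->
  (forall i : 'I_k, private_part N i != set0) ->
  forall M : 'I_k -> {set T},
    covers M ->
    (forall x y : T, query_matrix M x y = query_matrix N x y) ->
    exists sigma : {perm 'I_k}, forall i : 'I_k, M (sigma i) = N i.
Proof.
move=> _ Hpriv M HM Hq.
pose p i := xchoose (set0Pn _ (Hpriv i)).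
have pP i : p i \in N i /\ forall j, j != i -> p i \notin N j.
  have := xchooseP (set0Pn _ (Hpriv i)); rewrite -/(p i).
  rewrite /private_part in_setD => /andP[Hn Hi]; split => // j ji.
  apply/negP => pj; case/negP: Hn; apply/bigcupP; by exists j.
have qN i y : query_matrix N (p i) y = (y \in N i).
  apply/existsP/idP => [[j /andP[pj yj]]|yi]; last by exists i; rewrite yi (pP i).1.
  case: (eqVneq j i) => [<-//|ji]; by rewrite (negPf ((pP i).2 j ji)) in pj.
have same i j l : p i \in M l -> p j \in M l -> i = j.
  move=> pi pj; have : query_matrix M (p i) (p j) by apply/existsP; exists l; rewrite pi pj.
  rewrite Hq qN => pjN; apply/eqP; apply/negPn/negP => ji.
  by rewrite (negPf ((pP j).2 i ji)) in pjN.
pose f i := xchoose (HM (p i)).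
have fP i : p i \in M (f i) := xchooseP (HM (p i)).
have finj : injective f by move=> i j e; apply: (same i j (f i)); rewrite // e.
exists (perm finj) => i; rewrite permE.
have uniq j : p i \in M j -> j = f i.
  move=> pij; have e : f ((perm finj)^-1%g j) = j by rewrite -[in RHS](permKV (perm finj) j) permE.
  by rewrite -e in pij *; rewrite (same _ _ _ pij (fP _)).
apply/setP => y; apply/idP/idP => [yM|yN].
  rewrite -qN -Hq; apply/existsP; exists (f i); by rewrite fP yM.
move: yN; rewrite -qN -Hq => /existsP[j /andP[pj yj]].
by rewrite -(uniq j pj).
Qed.
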